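(* Let $e_1,\dots,e_m$ ($m\ge2$) be training domains, $\mathcal{F}$ a class of predictors, and for $f\in\mathcal{F}$ let $\mathcal{R}^{e_1}(f),\dots,\mathcal{R}^{e_m}(f)\in\mathbb{R}$ be its risks, with sample mean $\hat\mu_f$ and sample standard deviation $\hat\sigma_f=\big(\frac{1}{m-1}\sum_{i}(\mathcal{R}^{e_i}(f)-\hat\mu_f)^2\big)^{1/2}$. For each $f$ let $h_f\ge0$ be a data-dependent bandwidth such that, for every sequence $(f_k)$ in $\mathcal{F}$, $h_{f_k}\to0$ implies $\hat\sigma_{f_k}\to0$ (e.g. $h_f=(4/(3m))^{0.2}\hat\sigma_f$). Define the kernel estimate $\hat F_{\mathrm{KDE},f}(x)=\frac1m\sum_{i=1}^m\Phi\big(\frac{x-\mathcal{R}^{e_i}(f)}{h_f}\big)$, with $\Phi$ the standard normal CDF, its quantile function $\hat F^{-1}_{\mathrm{KDE},f}(\alpha)=\inf\{x:\hat F_{\mathrm{KDE},f}(x)\ge\alpha\}$, and for $\alpha\in(0,1)$ let $\hat f_\alpha\in\arg\min_{f\in\mathcal{F}}\hat F^{-1}_{\mathrm{KDE},f}(\alpha)$ (assumed to exist). For $f\in\mathcal{F}$ let $R^*_f:=\min_{i\in[m]}\mathcal{R}^{e_i}(f)$. Assume 1. $\mathcal{F}$ contains an invariant-risk predictor $f_0$ with finite training risks, i.e. $\hat\sigma_{f_0}=0$ and each $\mathcal{R}^{e_i}(f_0)<\infty$; and 2. $R_*:=\inf_{f\in\mathcal{F},\,i\in[m]}\mathcal{R}^{e_i}(f)>-\infty$.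 Then $\lim_{\alpha\to1}\hat\sigma_{\hat f_\alpha}=0$ and $\limsup_{\alpha\to1}R^*_{\hat f_\alpha}\le R^*_{f_0}$.
   Context: When $h_f=0$, the term $\Phi\big(\frac{x-r}{0}\big)$ is interpreted as the indicator $1\{x\ge r\}$, so that $\hat F_{\mathrm{KDE},f}$ is the empirical CDF of the risks (point masses).
   Formalization: The bandwidth $h_f$ of the invariant-risk predictor f₀ is also taken to be 0, in addition to $\hat\sigma_{f_0}=0$ in assumption 1. The statement above fails without it. *)

(* Defs.v *)
From Stdlib Require Import Reals Lra List.
From Coquelicot Require Import Coquelicot.
Open Scope R_scope.

Definition sumR (m : nat) (g : nat -> R) : R :=
  fold_right Rplus 0 (map g (seq 0 m)).

Definition minR (m : nat) (g : nat -> R) : R :=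
  fold_right Rmin (g 0%nat) (map g (seq 0 m)).

Definition mu_hat (m : nat) (r : nat -> R) : R := / INR m * sumR m r.
Definition sigma_hat (m : nat) (r : nat -> R) : R :=
  sqrt (/ INR (m - 1) * sumR m (fun i => (r i - mu_hat m r) ^ 2)).

Definition Phi (x : R) : R :=
  RInt_gen (fun t => / sqrt (2 * PI) * exp (- (t ^ 2) / 2))
           (Rbar_locally m_infty) (at_point x).

(* kernel term Phi((x - r)/h), read as the indicator 1{x >= r} when h = 0 *)
Definition kern (h x r : R) : R :=
  if Req_EM_T h 0 then (if Rle_dec r x then 1 else 0) else Phi ((x - r) / h).

Definition F_KDE (m : nat) (r : nat -> R) (h x : R) : R :=
  / INR m * sumR m (fun i => kern h x (r i)).

Definition Q_KDE (m : nat) (r : nat -> R) (h alpha : R) : Rbar :=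
  Glb_Rbar (fun x => alpha <= F_KDE m r h x).

(* Main.v *)
Require Import Defs.
From Stdlib Require Import Reals Lra Lia List Classical ClassicalEpsilon FunctionalExtensionality.
From Coquelicot Require Import Coquelicot.
Open Scope R_scope.

Ltac toR := match goal with |- @eq _ ?a ?b => change (@eq R a b) end.

Definition gg (t : R) : R := exp (- (t ^ 2) / 2).
Definition kk (u t : R) : R := exp (- (u ^ 2 * (1 + t ^ 2)) / 2) / (1 + t ^ 2).
Definition dkk (u t : R) : R := - u * exp (- (u ^ 2 * (1 + t ^ 2)) / 2).
Definition II (x : R) : R := RInt gg 0 x.
Definition JJ (x : R) : R := RInt (kk x) 0 1.
Definition HH (x : R) : R := II x * II x + 2 * JJ x.

Lemma gg_der x : is_derive gg x (- x * gg x).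
Proof. unfold gg. auto_derive; auto. assert (E: forall y:R, - (y*(y*1)) * / 2 = - y ^ 2 / 2) by (intros; unfold Rdiv; ring). rewrite E. field. Qed.

Lemma gg_cont x : continuous gg x.
Proof. apply (ex_derive_continuous (K:=R_AbsRing) (V:=R_NormedModule)). eexists; apply gg_der. Qed.

Lemma gg_pos x : 0 < gg x.
Proof. apply exp_pos. Qed.

Lemma gg_ex a b : ex_RInt gg a b.
Proof. apply (ex_RInt_continuous (V:=R_CompleteNormedModule)); intros; apply gg_cont. Qed.

Lemma II_der x : is_derive II x (gg x).
Proof.
  apply is_derive_RInt with (a := 0).
  - apply filter_forall; intros b. unfold II. apply (RInt_correct (V:=R_CompleteNormedModule)), gg_ex.
  - apply gg_cont.
Qed.

Lemma opp1p t : 0 < 1 + t ^ 2.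
Proof. pose proof (pow2_ge_0 t); lra. Qed.

Lemma kk_der u t : is_derive (fun u => kk u t) u (dkk u t).
Proof.
  unfold kk, dkk. pose proof (opp1p t). auto_derive.
  - lra.
  - assert (E: forall u t:R, - (u*(u*1)*(1+t*(t*1))) * /2 = -(u^2*(1+t^2))/2) by (intros; unfold Rdiv; ring).
    rewrite E. replace (1 + t*(t*1)) with (1 + t^2) by ring. field. lra.
Qed.

Lemma kk_cont u t : continuous (kk u) t.
Proof. apply (ex_derive_continuous (K:=R_AbsRing) (V:=R_NormedModule)). unfold kk. pose proof (opp1p t). auto_derive. lra. Qed.

Lemma kk_ex u a b : ex_RInt (kk u) a b.
Proof. apply (ex_RInt_continuous (V:=R_CompleteNormedModule)); intros; apply kk_cont. Qed.

Lemma dkk_cont u t : continuity_2d_pt dkk u t.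
Proof.
  unfold dkk.
  apply continuity_2d_pt_mult.
  - apply continuity_2d_pt_opp, continuity_2d_pt_id1.
  - apply continuity_1d_2d_pt_comp.
    + apply derivable_continuous_pt, derivable_pt_exp.
    + apply continuity_2d_pt_mult.
      * apply continuity_2d_pt_opp. apply continuity_2d_pt_mult.
        -- simpl. apply continuity_2d_pt_mult. apply continuity_2d_pt_id1.
           apply continuity_2d_pt_mult. apply continuity_2d_pt_id1. apply continuity_2d_pt_const.
        -- apply continuity_2d_pt_plus. apply continuity_2d_pt_const.
           simpl. apply continuity_2d_pt_mult. apply continuity_2d_pt_id2.
           apply continuity_2d_pt_mult. apply continuity_2d_pt_id2. apply continuity_2d_pt_const.
      * apply continuity_2d_pt_const.
Qed.

Lemma scalR (a b : R) : scal a b = a * b.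
Proof. reflexivity. Qed.

Lemma JJ_der0 x : is_derive JJ x (RInt (dkk x) 0 1).
Proof.
  assert (HD : forall u v, Derive (fun z => kk z v) u = dkk u v).
  { intros; apply is_derive_unique, kk_der. }
  assert (H := is_derive_RInt_param kk 0 1 x).
  rewrite (RInt_ext (fun t => Derive (fun u => kk u t) x) (dkk x)) in H.
  2: { intros; apply HD. }
  apply H.
  - apply filter_forall; intros y t _. eexists; apply kk_der.
  - intros t _. apply continuity_2d_pt_ext with dkk.
    + intros; symmetry; apply HD.
    + apply dkk_cont.
  - apply filter_forall; intros y. apply kk_ex.
Qed.

Lemma RInt_lin x : RInt (fun t => x * gg (x*t+0)) 0 1 = II x.
Proof.
  assert (H := RInt_comp_lin (V:=R_CompleteNormedModule) gg x 0 0 1 (gg_ex _ _)).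
  replace (x*0+0) with 0 in H by ring. replace (x*1+0) with x in H by ring.
  unfold II. exact H.
Qed.

Lemma RInt_dkk x : RInt (dkk x) 0 1 = - gg x * II x.
Proof.
  rewrite <- RInt_lin.
  assert (EX : ex_RInt (fun t => x * gg (x*t+0)) 0 1).
  { apply (ex_RInt_continuous (V:=R_CompleteNormedModule)). intros z _.
    apply (ex_derive_continuous (K:=R_AbsRing) (V:=R_NormedModule)).
    unfold gg. auto_derive. auto. }
  assert (H := RInt_scal (V:=R_CompleteNormedModule) (fun t => x * gg(x*t+0)) 0 1 (- gg x) EX).
  transitivity (RInt (fun t => scal (-gg x) (x * gg (x*t+0))) 0 1).
  - apply RInt_ext. intros t _. toR. rewrite scalR. unfold dkk, gg.
    replace (- (x ^ 2 * (1 + t ^ 2)) / 2) with (- x ^ 2 / 2 + - (x * t + 0) ^ 2 / 2) by field.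
    rewrite exp_plus. ring.
  - exact H.
Qed.

Lemma JJ_der x : is_derive JJ x (- gg x * II x).
Proof. rewrite <- RInt_dkk. apply JJ_der0. Qed.

Lemma HH_der x : is_derive HH x 0.
Proof.
  apply (is_derive_ext (fun t => plus (mult (II t) (II t)) (scal 2 (JJ t)))). { intros; reflexivity. }
  replace 0 with (plus (plus (mult (gg x) (II x)) (mult (II x) (gg x))) (scal 2 (- gg x * II x))).
  - apply (is_derive_plus (K:=R_AbsRing) (V:=R_NormedModule)).
    + apply (is_derive_mult (K:=R_AbsRing)); [apply II_der|apply II_der| intros; apply Rmult_comm].
    + apply is_derive_scal, JJ_der.
  - change (plus (gg x * II x + II x * gg x) (2 * (- gg x * II x)) = 0).
    change (gg x * II x + II x * gg x + 2 * (- gg x * II x) = 0). ring.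
Qed.

Lemma HH0 : HH 0 = PI / 2.
Proof.
  unfold HH, II, JJ. rewrite RInt_point.
  assert (E : RInt (kk 0) 0 1 = PI / 4).
  { rewrite (RInt_ext (kk 0) (fun t => / (1 + t ^ 2))).
    2: { intros t _. unfold kk. replace (- (0 ^ 2 * (1 + t ^ 2)) / 2) with 0 by field.
         toR. rewrite exp_0. unfold Rdiv. ring. }
    rewrite (is_RInt_unique _ _ _ (atan 1 - atan 0)). rewrite atan_1, atan_0. toR. ring.
    apply (is_RInt_derive (V:=R_CompleteNormedModule) atan).
    - intros y _. apply is_derive_Reals, derivable_pt_lim_atan.
    - intros y _. apply (ex_derive_continuous (K:=R_AbsRing) (V:=R_NormedModule)).
      pose proof (opp1p y). auto_derive. lra. }
  rewrite E. change (zero : R) with 0. toR. field.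
Qed.

Lemma HH_const x : HH x = PI / 2.
Proof.
  rewrite <- HH0.
  destruct (Rtotal_order x 0) as [Hx|[Hx|Hx]].
  - apply (eq_is_derive (V:=R_NormedModule)); [intros; apply HH_der | exact Hx].
  - subst; reflexivity.
  - symmetry. apply (eq_is_derive (V:=R_NormedModule)); [intros; apply HH_der | exact Hx].
Qed.

Lemma JJ_ge0 x : 0 <= JJ x.
Proof.
  apply RInt_ge_0. lra. apply kk_ex. intros t _. unfold kk.
  apply Rlt_le, Rdiv_lt_0_compat. apply exp_pos. apply opp1p.
Qed.

Lemma II_bound x : Rabs (II x) <= sqrt (PI / 2).
Proof.
  assert (H : II x * II x <= PI / 2).
  { rewrite <- (HH_const x). unfold HH. pose proof (JJ_ge0 x). lra. }
  rewrite <- sqrt_Rsqr_abs. apply sqrt_le_1_alt. exact H.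
Qed.

Lemma II_diff x y : II y - II x = RInt gg x y.
Proof.
  unfold II. rewrite <- (RInt_Chasles (V:=R_CompleteNormedModule) gg 0 x y) by apply gg_ex.
  change (RInt gg 0 x + RInt gg x y - RInt gg 0 x = RInt gg x y). ring.
Qed.

Lemma II_lt x y : x < y -> II x < II y.
Proof.
  intros H. assert (0 < RInt gg x y).
  { apply RInt_gt_0; auto. intros; apply gg_pos. intros; apply gg_cont. }
  rewrite <- II_diff in H0. lra.
Qed.

Lemma II_le x y : x <= y -> II x <= II y.
Proof. intros [H|H]. apply Rlt_le, II_lt, H. subst; lra. Qed.

Lemma la_ex : {l : R | - sqrt (PI / 2) <= l /\ filterlim II (Rbar_locally m_infty) (locally l)}.
Proof.
  set (E := fun z => exists y, z = - II y).
  assert (Hb : bound E).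
  { exists (sqrt (PI / 2)). intros z [y ->]. pose proof (II_bound y).
    pose proof (Rle_abs (- II y)). rewrite Rabs_Ropp in H0. lra. }
  assert (Hne : exists z, E z) by (exists (- II 0); exists 0; reflexivity).
  destruct (completeness E Hb Hne) as [M [HM1 HM2]].
  exists (- M). split.
  - assert (M <= sqrt (PI / 2)).
    { apply HM2. intros z [y ->]. pose proof (II_bound y).
      pose proof (Rle_abs (- II y)). rewrite Rabs_Ropp in H0. lra. }
    lra.
  - apply filterlim_locally. intros eps.
    assert (exists y0, M - eps < - II y0).
    { apply NNPP. intros Hn.
      assert (M <= M - eps).
      { apply HM2. intros z [y ->]. apply Rnot_lt_le. intros Hc. apply Hn. exists y. exact Hc. }
      pose proof (cond_pos eps). lra. }
    destruct H as [y0 Hy0].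
    exists y0. intros x Hx.
    assert (- II x <= M) by (apply HM1; exists x; reflexivity).
    pose proof (II_le x y0 (Rlt_le _ _ Hx)).
    change (Rabs (II x - - M) < eps). apply Rabs_def1; lra.
Qed.

Definition la : R := proj1_sig la_ex.

Lemma Phi_eq x : Phi x = / sqrt (2 * PI) * (II x - la).
Proof.
  unfold Phi. apply (is_RInt_gen_unique (V:=R_CompleteNormedModule)).
  assert (HD : Derive II = gg).
  { apply functional_extensionality. intros t. apply is_derive_unique, II_der. }
  assert (H : is_RInt_gen gg (Rbar_locally m_infty) (at_point x) (II x - la)).
  { rewrite <- HD. apply (is_RInt_gen_Derive (Fa := Rbar_locally m_infty) (Fb := at_point x)).
    - apply filter_forall. intros ab t _. eexists; apply II_der.
    - apply filter_forall. intros ab t _. rewrite HD. apply gg_cont.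
    - exact (proj2 (proj2_sig la_ex)).
    - intros P HP. apply locally_singleton in HP. exact HP. }
  apply (is_RInt_gen_scal (V:=R_NormedModule) _ (/ sqrt (2 * PI))) in H.
  exact H.
Qed.

Lemma Phi_le x y : x <= y -> Phi x <= Phi y.
Proof.
  intros H. rewrite !Phi_eq. apply Rmult_le_compat_l.
  - apply Rlt_le, Rinv_0_lt_compat, sqrt_lt_R0. pose proof PI_RGT_0. lra.
  - pose proof (II_le x y H). lra.
Qed.

Lemma Phi_lt1 x : Phi x < 1.
Proof.
  rewrite Phi_eq.
  assert (S : sqrt (2 * PI) = 2 * sqrt (PI / 2)).
  { replace (2 * PI) with ((2 * 2) * (PI / 2)) by field.
    pose proof PI_RGT_0.
    rewrite sqrt_mult by lra. rewrite sqrt_square by lra. reflexivity. }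
  assert (P : 0 < sqrt (PI / 2)).
  { apply sqrt_lt_R0. pose proof PI_RGT_0. lra. }
  rewrite S.
  pose proof (II_lt x (x + 1) ltac:(lra)).
  pose proof (II_bound (x + 1)). pose proof (Rle_abs (II (x+1))).
  pose proof (proj1 (proj2_sig la_ex)). fold la in H2.
  apply (Rmult_lt_reg_l (2 * sqrt (PI / 2))). lra.
  rewrite <- Rmult_assoc, Rinv_r by lra. lra.
Qed.

Lemma sum_ge_term (g : nat -> R) l k :
  (forall i, In i l -> 0 <= g i) -> In k l -> g k <= fold_right Rplus 0 (map g l).
Proof.
  induction l as [|a l IH]; simpl; intros H Hk; [contradiction|].
  destruct Hk as [->|Hk].
  - assert (0 <= fold_right Rplus 0 (map g l)).
    { clear IH. induction l as [|b l IH2]; simpl; [lra|].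
      assert (0 <= g b) by (apply H; simpl; auto).
      assert (0 <= fold_right Rplus 0 (map g l)) by (apply IH2; intros i Hi; apply H; simpl in *; tauto).
      lra. }
    lra.
  - assert (0 <= g a) by (apply H; auto).
    assert (g k <= fold_right Rplus 0 (map g l)) by (apply IH; auto).
    lra.
Qed.

Lemma sum_le_term (g : nat -> R) l k c :
  (forall i, In i l -> g i <= c) -> In k l ->
  fold_right Rplus 0 (map g l) <= g k - c + INR (length l) * c.
Proof.
  assert (Hall : forall l, (forall i, In i l -> g i <= c) -> fold_right Rplus 0 (map g l) <= INR (length l) * c).
  { induction l0 as [|a l0 IH]; cbn [fold_right map length]; intros H; [simpl; lra|].
    rewrite S_INR. assert (g a <= c) by (apply H; simpl; auto).
    assert (fold_right Rplus 0 (map g l0) <= INR (length l0) * c) by (apply IH; intros; apply H; simpl; auto). lra. }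
  induction l as [|a l IH]; cbn [fold_right map length In]; intros H Hk; [contradiction|].
  rewrite S_INR. destruct Hk as [->|Hk].
  - assert (fold_right Rplus 0 (map g l) <= INR (length l) * c) by (apply Hall; intros; apply H; simpl; auto). lra.
  - assert (g a <= c) by (apply H; simpl; auto).
    assert (fold_right Rplus 0 (map g l) <= g k - c + INR (length l) * c) by (apply IH; auto; intros; apply H; simpl; auto). lra.
Qed.

Lemma sum_ext (g1 g2 : nat -> R) l :
  (forall i, In i l -> g1 i = g2 i) -> fold_right Rplus 0 (map g1 l) = fold_right Rplus 0 (map g2 l).
Proof.
  induction l as [|a l IH]; simpl; intros H; auto.
  rewrite H by auto. rewrite IH; auto.
Qed.

Lemma sum_const1 (l : list nat) : fold_right Rplus 0 (map (fun _ => 1) l) = INR (length l).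
Proof. induction l; cbn [fold_right map length]; [reflexivity|]. rewrite S_INR, IHl. ring. Qed.

Lemma min_le (g : nat -> R) l c :
  g 0%nat <= c -> (forall i, In i l -> g i <= c) -> fold_right Rmin (g 0%nat) (map g l) <= c.
Proof.
  induction l as [|a l IH]; simpl; intros H0 H; auto.
  apply Rle_trans with (g a). apply Rmin_l. auto.
Qed.

Lemma min_ge (g : nat -> R) l c :
  c <= g 0%nat -> (forall i, In i l -> c <= g i) -> c <= fold_right Rmin (g 0%nat) (map g l).
Proof.
  induction l as [|a l IH]; simpl; intros H0 H; auto.
  apply Rmin_glb; auto.
Qed.

Lemma kern_le1 hh y r : kern hh y r <= 1.
Proof.
  unfold kern. destruct (Req_EM_T hh 0). destruct (Rle_dec r y); lra.
  apply Rlt_le, Phi_lt1.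
Qed.

Lemma kern_prop hh y r T c : 0 <= hh -> c <= kern hh y r -> 0 < c -> Phi T < c ->
  (hh = 0 /\ r <= y) \/ (0 < hh /\ T < (y - r) / hh).
Proof.
  intros Hh Hc Hc0 HT. unfold kern in Hc. destruct (Req_EM_T hh 0) as [E|E].
  - left. split; auto. destruct (Rle_dec r y); auto. lra.
  - right. split; [lra|]. apply Rnot_le_lt. intros Hle.
    pose proof (Phi_le _ _ Hle). lra.
Qed.

Lemma kern_big m r hh y alpha k : (0 < m)%nat -> (k < m)%nat ->
  alpha <= F_KDE m r hh y -> INR m * alpha - INR m + 1 <= kern hh y (r k).
Proof.
  intros Hm Hk H. unfold F_KDE, sumR in H.
  assert (Hpos : 0 < INR m) by (apply lt_0_INR; lia).
  pose proof (sum_le_term (fun i => kern hh y (r i)) (seq 0 m) k 1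
     (fun i _ => kern_le1 hh y (r i)) (proj2 (in_seq m 0 k) (conj (Nat.le_0_l k) Hk))).
  rewrite length_seq in H0.
  apply (Rmult_le_compat_l (INR m)) in H; [|lra].
  rewrite <- Rmult_assoc, Rinv_r, Rmult_1_l in H by lra. lra.
Qed.

Theorem propositionA5
  (m : nat) (Hm : (2 <= m)%nat)
  (Fc : Type)                       (* the class of predictors *)
  (Risk : Fc -> nat -> R)           (* Risk f i = R^{e_(i+1)}(f), i < m *)
  (h : Fc -> R)                     (* bandwidths *)
  (Hh_nonneg : forall f, 0 <= h f)
  (Hh_seq : forall u : nat -> Fc,
      is_lim_seq (fun k => h (u k)) 0 ->
      is_lim_seq (fun k => sigma_hat m (Risk (u k))) 0)
  (fhat : R -> Fc)
  (Hfhat : forall alpha, 0 < alpha < 1 -> forall f,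
      Rbar_le (Q_KDE m (Risk (fhat alpha)) (h (fhat alpha)) alpha)
              (Q_KDE m (Risk f) (h f) alpha))
  (f0 : Fc)
  (Hf0 : sigma_hat m (Risk f0) = 0)
  (Hhf0 : h f0 = 0)
  (Hbdd : exists B : R, forall f i, (i < m)%nat -> B <= Risk f i) :
  filterlim (fun alpha => sigma_hat m (Risk (fhat alpha))) (at_left 1) (locally 0)
  /\ (forall eps : R, 0 < eps ->
        at_left 1 (fun alpha =>
          minR m (Risk (fhat alpha)) <= minR m (Risk f0) + eps)).
Proof.
  set (r0 := mu_hat m (Risk f0)).
  assert (Hmpos : 0 < INR m) by (apply lt_0_INR; lia).
  assert (Hall0 : forall i, (i < m)%nat -> Risk f0 i = r0).
  { intros i Hi. unfold sigma_hat in Hf0. fold r0 in Hf0.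
    set (S := sumR m (fun i => (Risk f0 i - r0) ^ 2)) in Hf0.
    assert (Hm1 : 0 < INR (m - 1)) by (apply lt_0_INR; lia).
    assert (HS : S <= 0).
    { apply Rnot_lt_le. intros HS.
      assert (0 < sqrt (/ INR (m - 1) * S)).
      { apply sqrt_lt_R0. apply Rmult_lt_0_compat; auto. apply Rinv_0_lt_compat; auto. }
      lra. }
    assert (Ht : (Risk f0 i - r0) ^ 2 <= S).
    { apply (sum_ge_term (fun i => (Risk f0 i - r0) ^ 2)).
      - intros; apply pow2_ge_0.
      - apply in_seq; lia. }
    pose proof (pow2_ge_0 (Risk f0 i - r0)).
    assert ((Risk f0 i - r0) ^ 2 = 0) by lra. nra. }
  assert (Hmin0 : r0 <= minR m (Risk f0)).
  { unfold minR. apply min_ge. rewrite Hall0 by lia. lra.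
    intros i Hi. apply in_seq in Hi. rewrite Hall0 by lia. lra. }
  assert (HQ0 : forall alpha, alpha <= 1 -> Rbar_le (Q_KDE m (Risk f0) (h f0) alpha) r0).
  { intros alpha Ha. unfold Q_KDE.
    destruct (Glb_Rbar_correct (fun x => alpha <= F_KDE m (Risk f0) (h f0) x)) as [H1 _].
    apply H1. unfold F_KDE, sumR.
    rewrite (sum_ext _ (fun _ => 1)).
    - rewrite sum_const1, length_seq. rewrite Rinv_l by lra. exact Ha.
    - intros i Hi. apply in_seq in Hi. rewrite Hhf0, Hall0 by lia. unfold kern.
      destruct (Req_EM_T 0 0) as [_|E]; [|congruence].
      destruct (Rle_dec r0 r0); [reflexivity|lra]. }
  assert (Hcore : forall alpha, 0 < alpha < 1 -> forall d, 0 < d ->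
     exists y, y < r0 + d /\ alpha <= F_KDE m (Risk (fhat alpha)) (h (fhat alpha)) y).
  { intros alpha Ha d Hd. apply NNPP. intros Hn.
    pose proof (Rbar_le_trans _ _ _ (Hfhat alpha Ha f0) (HQ0 alpha (Rlt_le _ _ (proj2 Ha)))).
    unfold Q_KDE in H.
    destruct (Glb_Rbar_correct (fun x => alpha <= F_KDE m (Risk (fhat alpha)) (h (fhat alpha)) x)) as [_ H2].
    assert (Rbar_le (r0 + d) (Glb_Rbar (fun x => alpha <= F_KDE m (Risk (fhat alpha)) (h (fhat alpha)) x))).
    { apply H2. intros x Hx. simpl. apply Rnot_lt_le. intros Hlt. apply Hn. exists x; auto. }
    pose proof (Rbar_le_trans _ _ _ H0 H). simpl in H1. lra. }
  assert (mainC : forall T d0, 0 < d0 -> exists d, 0 < d /\ forall alpha, 1 - d < alpha < 1 ->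
     exists y, y < r0 + d0 /\ forall i, (i < m)%nat ->
       (h (fhat alpha) = 0 /\ Risk (fhat alpha) i <= y) \/
       (0 < h (fhat alpha) /\ T < (y - Risk (fhat alpha) i) / h (fhat alpha))).
  { intros T d0 Hd0. set (p := Rmax 0 (Phi T)).
    assert (Hp1 : p < 1) by (unfold p; apply Rmax_lub_lt; [lra|apply Phi_lt1]).
    assert (Hp0 : 0 <= p) by apply Rmax_l.
    assert (HpT : Phi T <= p) by apply Rmax_r.
    exists (Rmin 1 ((1 - p) / INR m)). split.
    { apply Rmin_glb_lt. lra. apply Rdiv_lt_0_compat; lra. }
    intros alpha Ha.
    pose proof (Rmin_l 1 ((1 - p) / INR m)). pose proof (Rmin_r 1 ((1 - p) / INR m)).
    destruct (Hcore alpha ltac:(lra) d0 Hd0) as [y [Hy1 Hy2]].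
    exists y. split; auto. intros i Hi.
    pose proof (kern_big m (Risk (fhat alpha)) (h (fhat alpha)) y alpha i ltac:(lia) Hi Hy2).
    assert (Hc : p < INR m * alpha - INR m + 1).
    { assert (E1 : (1 - p) / INR m * INR m = 1 - p) by (field; lra).
      assert (E2 : 1 - alpha < (1 - p) / INR m) by lra.
      apply (Rmult_lt_compat_r (INR m)) in E2; lra. }
    apply (kern_prop _ _ _ T (INR m * alpha - INR m + 1)); auto; lra. }
  destruct Hbdd as [B HB].
  assert (HBr0 : B <= r0) by (rewrite <- (Hall0 0%nat) by lia; apply HB; lia).
  split.
  -
    assert (Hhb : forall eta, 0 < eta -> exists d, 0 < d /\ forall alpha, 1 - d < alpha < 1 -> h (fhat alpha) < eta).
    { intros eta Heta. set (D := r0 + 1 - B).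
      destruct (mainC (D / eta) 1 ltac:(lra)) as [d [Hd Hd2]].
      exists d. split; auto. intros alpha Ha.
      destruct (Hd2 alpha Ha) as [y [Hy1 Hy2]].
      destruct (Hy2 0%nat ltac:(lia)) as [[E _]|[Hpos Hlt]]; [lra|].
      pose proof (HB (fhat alpha) 0%nat ltac:(lia)).
      set (hh := h (fhat alpha)) in *.
      apply (Rmult_lt_compat_r hh) in Hlt; auto.
      replace ((y - Risk (fhat alpha) 0%nat) / hh * hh) with (y - Risk (fhat alpha) 0%nat) in Hlt by (field; lra).
      assert (D / eta * hh < D) by (unfold D in *; lra).
      assert (D / eta * hh = D * (hh / eta)) by (field; lra).
      rewrite H1 in H0.
      assert (hh / eta < 1).
      { apply (Rmult_lt_reg_l D). unfold D; lra. lra. }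
      apply (Rmult_lt_compat_r eta) in H2; auto.
      replace (hh / eta * eta) with hh in H2 by (field; lra). lra. }
    apply filterlim_locally. intros eps.
    apply NNPP. intros Hn.
    assert (Hex : forall n : nat, exists a, Rabs (a - 1) < / (INR n + 1) /\ a < 1 /\
       ~ (Rabs (sigma_hat m (Risk (fhat a)) - 0) < eps)).
    { intros n. apply NNPP. intros Hn2. apply Hn.
      assert (Hq : 0 < / (INR n + 1)) by (apply Rinv_0_lt_compat; pose proof (pos_INR n); lra).
      exists (mkposreal _ Hq). intros a Ha Ha1.
      apply NNPP. intros Hc. apply Hn2. exists a. split; [exact Ha|]. split; auto. }
    set (a := fun n => proj1_sig (constructive_indefinite_description _ (Hex n))).
    assert (Ha : forall n, Rabs (a n - 1) < / (INR n + 1) /\ a n < 1 /\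
       ~ (Rabs (sigma_hat m (Risk (fhat (a n))) - 0) < eps)).
    { intros n. unfold a. destruct (constructive_indefinite_description _ (Hex n)) as [x Hx]. exact Hx. }
    assert (Hlim : is_lim_seq (fun k => h (fhat (a k))) 0).
    { apply is_lim_seq_spec. intros eta.
      destruct (Hhb eta (cond_pos eta)) as [d [Hd Hd2]].
      destruct (archimed_cor1 d Hd) as [N [HN HN0]].
      exists N. intros n Hn3.
      destruct (Ha n) as [Han1 [Han2 _]].
      assert (/ (INR n + 1) <= / INR N).
      { apply Rinv_le_contravar. apply lt_0_INR; lia. apply le_INR in Hn3. lra. }
      assert (1 - d < a n) by (apply Rabs_def2 in Han1; lra).
      pose proof (Hd2 (a n) (conj H0 Han2)). pose proof (Hh_nonneg (fhat (a n))).
      rewrite Rminus_0_r, Rabs_right by lra. exact H1. }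
    apply Hh_seq in Hlim. apply is_lim_seq_spec in Hlim.
    destruct (Hlim eps) as [N HN].
    destruct (Ha N) as [_ [_ HnN]]. apply HnN. apply HN. lia.
  -
    intros eps Heps.
    destruct (mainC 0 eps Heps) as [d [Hd Hd2]].
    exists (mkposreal d Hd). intros alpha Hb Ha1.
    change (Rabs (alpha - 1) < d) in Hb. apply Rabs_def2 in Hb.
    destruct (Hd2 alpha ltac:(lra)) as [y [Hy1 Hy2]].
    assert (Hr : forall i, (i < m)%nat -> Risk (fhat alpha) i <= r0 + eps).
    { intros i Hi. destruct (Hy2 i Hi) as [[_ Hle]|[Hpos Hlt]]; [lra|].
      apply (Rmult_lt_compat_r (h (fhat alpha))) in Hlt; auto.
      replace ((y - Risk (fhat alpha) i) / h (fhat alpha) * h (fhat alpha)) with (y - Risk (fhat alpha) i) in Hlt by (field; lra).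
      lra. }
    apply Rle_trans with (r0 + eps); [|lra].
    unfold minR. apply min_le. apply Hr; lia.
    intros i Hi. apply in_seq in Hi. apply Hr; lia.
Qed.
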